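(* Let $n,m\ge1$, $r>0$, let $\varphi_1,\dots,\varphi_n:\mathbb{R}\to[0,\infty)$ be nonnegative functions and $x_1,\dots,x_m\in\mathbb{R}$ such that for each $j$ there is $i$ with $\varphi_i(x_j)>0$. Define sequences as follows. Set $v^1_i=\sqrt{r/n}$ for $i=1,\dots,n$. For $k\ge1$, given $v^k\in[0,\infty)^n$, let $u^k\in[0,\infty)^n$ with $\sum_i(u^k_i)^2=r$ be a point at which $$\widehat l^{\,k}(u)=\prod_{j=1}^m\Big(\sum_{i=1}^n u_i v^k_i\varphi_i(x_j)\Big)$$ attains its maximum over the sphere $\{u\in\mathbb{R}^n:\sum_iu_i^2=r\}$; then let $\overline\theta^{k+1}>0$ be defined by $(\overline\theta^{k+1})^2\sum_{i=1}^n u^k_iv^k_i=r$ and set $v^{k+1}_i=\overline\theta^{k+1}\sqrt{u^k_iv^k_i}$, so that $\sum_i(v^{k+1}_i)^2=r$. Then $\lim_{k\to\infty}\overline\theta^k=1$.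
   Context: This is the outer iteration (''steps (i)–(iii)'') for maximizing the likelihood $\prod_j\sum_i u_iv_i\varphi_i(x_j)$ subject to $\sum u_i^2=\sum v_i^2=r$, where step (ii) computes the maximizer $u^k$ with $v^k$ fixed. *)

(* Defs.v *)
From HB Require Import structures.
From mathcomp Require Import all_boot all_order all_algebra.
From mathcomp Require Import all_classical all_reals all_analysis.
Set Implicit Arguments. Unset Strict Implicit. Unset Printing Implicit Defensive.
Import Order.TTheory GRing.Theory Num.Theory.
Local Open Scope ring_scope.

Definition lhat (R : realType) (n m : nat) (phi : 'I_n -> R -> R)
  (x : 'I_m -> R) (v u : 'I_n -> R) : R :=
  \prod_(j < m) \sum_(i < n) u i * v i * phi i (x j).

Definition is_sphere_maximizer (R : realType) (n m : nat) (phi : 'I_n -> R -> R)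
  (x : 'I_m -> R) (r : R) (v u : 'I_n -> R) : Prop :=
  \sum_(i < n) u i ^+ 2 = r /\
  forall w : 'I_n -> R, \sum_(i < n) w i ^+ 2 = r ->
    lhat phi x v w <= lhat phi x v u.

(* Main.v *)
Require Import Defs.
From HB Require Import structures.
From mathcomp Require Import all_boot all_order all_algebra.
From mathcomp Require Import all_classical all_reals all_analysis.
From mathcomp Require Import ring lra.
Import Order.TTheory GRing.Theory Num.Theory.
Import numFieldNormedType.Exports.
Local Open Scope classical_set_scope.
Local Open Scope ring_scope.

Theorem lemma6 (R : realType) (n m : nat) (r : R)
  (phi : 'I_n -> R -> R) (x : 'I_m -> R)
  (u v : nat -> 'I_n -> R) (theta : nat -> R) :
  (0 < n)%N -> (0 < m)%N -> 0 < r ->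
  (forall i t, 0 <= phi i t) ->
  (forall j : 'I_m, exists i : 'I_n, 0 < phi i (x j)) ->
  (forall i, v 0%N i = Num.sqrt (r / n%:R)) ->
  (forall k i, 0 <= u k i) ->
  (forall k, is_sphere_maximizer phi x r (v k) (u k)) ->
  (forall k, 0 < theta k) ->
  (forall k, theta k ^+ 2 * (\sum_(i < n) u k i * v k i) = r) ->
  (forall k i, v k.+1 i = theta k * Num.sqrt (u k i * v k i)) ->
  (theta k @[k --> \oo] --> (1 : R)).
Proof.
move=> n0 m0 r0 phi0 phipos v0 u0 umax th0 thS vS.
have rn0 : 0 <= r / n%:R by apply: divr_ge0; [exact: ltW|exact: ler0n].
have vge0 : forall k i, 0 <= v k i.
  case=> [|k] i; first by rewrite v0 sqrtr_ge0.
  by rewrite vS mulr_ge0 ?sqrtr_ge0 // ltW.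
have vsph : forall k, \sum_(i < n) v k i ^+ 2 = r.
  case=> [|k].
    under eq_bigr => i _ do rewrite v0 sqr_sqrtr //.
    rewrite sumr_const card_ord -[_ *+ n]mulr_natr divfK //.
    by rewrite pnatr_eq0 -lt0n.
  rewrite -(thS k) mulr_sumr; apply: eq_bigr => i _.
  by rewrite vS exprMn sqr_sqrtr // mulr_ge0.
have thge1 : forall k, 1 <= theta k.
  move=> k.
  have hS : \sum_(i < n) u k i * v k i <= r.
    have -> : r = \sum_(i < n) (u k i ^+ 2 + v k i ^+ 2) / 2.
      by rewrite -mulr_suml big_split /= (proj1 (umax k)) vsph; field.
    apply: ler_sum => i _.
    have := sqr_ge0 (u k i - v k i); lra.
  have := thS k; have := th0 k; move: hS.
  set S := \sum_(i < n) _; set t := theta k => hS h1 h2.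
  have t2pos : 0 < t ^+ 2 by rewrite exprn_gt0.
  have Spos : 0 < S.
    by rewrite -(pmulr_rgt0 S t2pos) h2.
  have t2ge1 : 1 <= t ^+ 2.
    by rewrite -(ler_pM2r Spos) mul1r h2.
  rewrite leNgt; apply/negP => ht.
  have : t ^+ 2 < 1 by rewrite expr2; nra.
  by rewrite ltNge t2ge1.
set L := fun k => lhat phi x (v k) (v k).
have Lge0 : forall k, 0 <= L k.
  move=> k; apply: prodr_ge0 => j _; apply: sumr_ge0 => i _.
  by rewrite !mulr_ge0.
have Lstep : forall k, L k.+1 = (theta k ^+ 2) ^+ m * lhat phi x (v k) (u k).
  move=> k; rewrite /L /lhat -[in X in _ ^+ X](card_ord m) -prodrMl.
  apply: eq_bigr => j _; rewrite mulr_sumr; apply: eq_bigr => i _.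
  rewrite vS.
  have hs := sqr_sqrtr (mulr_ge0 (u0 k i) (vge0 k i)).
  set s := Num.sqrt _ in hs *.
  have -> : theta k * s * (theta k * s) * phi i (x j) =
    theta k ^+ 2 * (s ^+ 2) * phi i (x j) by rewrite !expr2; ring.
  by rewrite hs !mulrA.
have Lmax : forall k, L k <= lhat phi x (v k) (u k).
  by move=> k; apply: (proj2 (umax k)); apply: vsph.
have Lineq : forall k, (theta k ^+ 2) ^+ m * L k <= L k.+1.
  move=> k; rewrite Lstep; apply: ler_wpM2l; last exact: Lmax.
  by apply: exprn_ge0; apply: sqr_ge0.
have Lmono : forall k, L k <= L k.+1.
  move=> k; apply: le_trans (Lineq k).
  rewrite ler_peMl //; apply: exprn_ege1.
  by have := thge1 k; have := th0 k; nra.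
have L0pos : 0 < L 0%N.
  apply: prodr_gt0 => j _.
  have [i0 hi0] := phipos j.
  rewrite (bigD1 i0) //=.
  have h1 : 0 <= \sum_(i < n | i != i0) v 0%N i * v 0%N i * phi i (x j).
    by apply: sumr_ge0 => i _; rewrite !mulr_ge0.
  have h2 : 0 < v 0%N i0 * v 0%N i0 * phi i0 (x j).
    rewrite mulr_gt0 // -expr2 v0 sqr_sqrtr // divr_gt0 //.
    by rewrite ltr0n.
  lra.
set B := \prod_(j < m) (r * \sum_(i < n) phi i (x j)).
have LB : forall k, L k <= B.
  move=> k; apply: ler_prod => j _; apply/andP; split.
    by apply: sumr_ge0 => i _; rewrite !mulr_ge0.
  rewrite -(vsph k) mulr_suml; apply: ler_sum => i _.
  rewrite -expr2; apply: ler_wpM2l; first exact: sqr_ge0.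
  rewrite (bigD1 i) //=.
  have : 0 <= \sum_(i0 < n | i0 != i) phi i0 (x j) by apply: sumr_ge0.
  lra.
have Lhomo : {homo L : a b / (a <= b)%N >-> a <= b}.
  by apply/nondecreasing_seqP.
have Lub : has_ubound (range L) by exists B => _ [k _ <-].
have Lcvg := nondecreasing_cvgn Lhomo Lub.
set l := sup (range L) in Lcvg.
have lpos : 0 < l.
  apply: lt_le_trans L0pos _; apply: ub_le_sup => //; by exists 0%N.
have Lcvg1 : L k.+1 @[k --> \oo] --> l.
  by have := Lcvg; rewrite -cvg_shiftS.
have ratio : L k.+1 / L k @[k --> \oo] --> (1 : R).
  have := cvgM Lcvg1 (cvgV (lt0r_neq0 lpos) Lcvg).
  by rewrite mulfV ?lt0r_neq0 //; apply.
apply: (@squeeze_cvgr _ _ _ _ (fun=> (1:R)) (fun k => L k.+1 / L k));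
  [|exact: cvg_cst|exact: ratio].
near=> k; apply/andP; split; first exact: thge1.
have Lkpos : 0 < L k.
  apply: lt_le_trans L0pos _; exact: Lhomo.
rewrite ler_pdivlMr //; apply: le_trans (Lineq k).
apply: ler_wpM2r; first exact: ltW.
have t1 := thge1 k.
have hm : (0 < 2 * m)%N by rewrite muln_gt0 m0.
rewrite -exprM; move: (2 * m)%N hm => [//|p _].
rewrite exprS ler_peMr //; [exact: ltW | exact: exprn_ege1].
Unshelve. all: by end_near.
Qed.
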